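(* Let $X,Y$ be compact Hausdorff spaces and $\pi\colon X\to Y$ a continuous surjection. Let $f\colon X\setminus I(f)\to X$ and $g\colon Y\setminus I(g)\to Y$ be partially continuous self-maps such that $I(f)\subseteq\pi^{-1}(I(g))$ and $\pi\circ f=g\circ\pi$ on $X\setminus\pi^{-1}(I(g))$. Then $h_{\mathrm{top}}(f)\ge h_{\mathrm{top}}(g)$.
   Context: A partially continuous self-map of a compact space $X$ is a continuous map $f\colon X\setminus I(f)\to X$ with $I(f)$ closed. Entropy: $\xi_0=X$, $\xi_n=\{x\in X\setminus I(f): f(x)\in\xi_{n-1}\}$; the canonical uniform structure has as entourages all neighbourhoods of the diagonal; for symmetric $\mathcal E$ and $x\in\xi_n$, $B^n_{\mathcal E}(x)=\{y\in\xi_n:(f^i(x),f^i(y))\in\mathcal E,0\le i\le n\}$; $S(n,\mathcal E)$ is the maximal size of $E\subset\xi_n$ with $x\notin B^n_{\mathcal E}(y)$ for distinct $x,y\in E$; $h_{\mathrm{top}}(f)=\sup_{\mathcal E}\limsup_n\frac1n\log S(n,\mathcal E)$. *)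

(* Defs.v *)
From HB Require Import structures.
From mathcomp Require Import all_boot all_order all_algebra.
From mathcomp Require Import all_classical all_reals all_analysis.
Set Implicit Arguments. Unset Strict Implicit. Unset Printing Implicit Defensive.
Import Order.TTheory GRing.Theory Num.Theory.
Local Open Scope classical_set_scope.
Local Open Scope ring_scope.

(* A partially continuous self-map of X: a total function f : X -> X together
   with a closed indeterminacy set I; only the restriction of f to X \ I
   matters, and it is required to be continuous there. *)
Definition partially_continuous (X : topologicalType) (I : set X) (f : X -> X) :=
  closed I /\ {within ~` I, continuous f}.

Fixpoint xi (X : Type) (I : set X) (f : X -> X) (n : nat) : set X :=
  match n with
  | 0 => setT
  | n.+1 => [set x | ~ I x /\ xi I f n (f x)]
  end.

(* Entourages of the canonical uniform structure: neighbourhoods of the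
   diagonal in X x X. *)
Definition entourage_diag (X : topologicalType) (E : set (X * X)) :=
  forall x : X, nbhs (x, x) E.

Definition symmetric_set (X : Type) (E : set (X * X)) :=
  forall x y, E (x, y) -> E (y, x).

Definition bowen_ball (X : Type) (I : set X) (f : X -> X) (n : nat)
  (E : set (X * X)) (x : X) : set X :=
  [set y | xi I f n y /\ forall i, (i <= n)%N -> E (iter i f x, iter i f y)].

Definition separated (X : eqType) (I : set X) (f : X -> X) (n : nat)
  (E : set (X * X)) (s : seq X) :=
  uniq s /\ (forall x, x \in s -> xi I f n x) /\
  (forall x y, x \in s -> y \in s -> x <> y -> ~ bowen_ball I f n E y x).

Definition S_sep (R : realType) (X : eqType) (I : set X) (f : X -> X) (n : nat)
  (E : set (X * X)) : \bar R :=
  ereal_sup [set ((size s)%:R)%:E | s in [set s | separated I f n E s]].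

Definition lnE (R : realType) (x : \bar R) : \bar R :=
  match x with
  | r%:E => if r == 0 then -oo%E else (ln r)%:E
  | +oo%E => +oo%E
  | -oo%E => -oo%E
  end.

Definition htop (R : realType) (X : topologicalType) (I : set X) (f : X -> X)
  : \bar R :=
  ereal_sup [set limn_esup (fun n => (((n%:R : R)^-1)%:E * lnE (S_sep R I f n E))%E)
            | E in [set E : set (X * X) | entourage_diag E /\ symmetric_set E]].

(* Main.v *)
Require Import Defs.
From HB Require Import structures.
From mathcomp Require Import all_boot all_order all_algebra.
From mathcomp Require Import all_classical all_reals all_analysis.
Import Order.TTheory GRing.Theory Num.Theory.
Local Open Scope classical_set_scope.
Local Open Scope ereal_scope.

Lemma limn_esup_le_homo (R : realType) (u v : (\bar R)^nat) :
  (forall n, u n <= v n) -> limn_esup u <= limn_esup v.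
Proof.
move=> uv; rewrite /limn_esup /limf_esup.
apply: le_ereal_inf_tmp => _ [V FV <-].
apply: le_trans (ereal_inf_lbound _) _; first by exists V.
apply: ge_ereal_sup => _ [n Vn <-].
apply: le_trans (uv n) _.
by apply: ereal_sup_ubound; exists n.
Qed.

Lemma lnE_le (R : realType) (x y : \bar R) : 0 <= x -> x <= y -> lnE x <= lnE y.
Proof.
case: x => [r| |] //=; case: y => [s| |] //= r0.
- rewrite lee_fin => rs.
  case: ifPn => [_|rn0]; first by rewrite leNye.
  have r_gt0 : (0 < r)%R by rewrite lt_def rn0 -lee_fin.
  have s_gt0 : (0 < s)%R by apply: lt_le_trans rs.
  by rewrite gt_eqF // lee_fin ler_ln // posrE.
- move=> _; case: ifP => _; by rewrite ?leey.
Qed.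

Lemma sep_nil (X : eqType) (I : set X) (f : X -> X) n E : Defs.separated I f n E [::].
Proof. by split=> //; split. Qed.

Lemma S_sep_ge0 (R : realType) (X : eqType) (I : set X) (f : X -> X) n E :
  0 <= S_sep R I f n E.
Proof.
apply: le_ereal_sup_tmp; exists 0 => //; exists [::] => //; exact: sep_nil.
Qed.

Theorem corollary1p17 (R : realType) (X Y : topologicalType)
  (pi : X -> Y) (If : set X) (f : X -> X) (Ig : set Y) (g : Y -> Y) :
  compact [set: X] -> hausdorff_space X ->
  compact [set: Y] -> hausdorff_space Y ->
  continuous pi -> (forall y : Y, exists x : X, pi x = y) ->
  partially_continuous If f -> partially_continuous Ig g ->
  If `<=` pi @^-1` Ig ->
  (forall x, ~ Ig (pi x) -> pi (f x) = g (pi x)) ->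
  htop R Ig g <= htop R If f.
Proof.
move=> _ _ _ _ cpi surj _ _ sI comm.
have [sec secK] := choice surj.
have xiT : forall n x, xi Ig g n (pi x) -> xi If f n x.
  elim=> [//|n IH] x /= [nI H]; split; first by move=> /sI.
  by apply: IH; rewrite comm.
have itT : forall n x i, xi Ig g n (pi x) -> (i <= n)%N ->
    pi (iter i f x) = iter i g (pi x).
  move=> n x i; elim: i n x => [//|i IH] [//|n] x [nI H] lin.
  rewrite !iterSr (IH n); first by rewrite comm.
    by rewrite comm.
  exact: lin.
apply: ge_ereal_sup => _ [E [entE symE] <-].
pose E' := [set p : X * X | E (pi p.1, pi p.2)].
apply: le_trans (ereal_sup_ubound _); last first.
  exists E'; last reflexivity.
  split.
    move=> x.
    have : (fun p : X * X => (pi p.1, pi p.2)) @ (x, x) --> (pi x, pi x).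
      apply: cvg_pair.
        apply: (cvg_comp fst pi); last exact: cpi.
        exact: (@cvg_fst _ _ (nbhs x) (nbhs x)).
      apply: (cvg_comp snd pi); last exact: cpi.
      exact: (@cvg_snd _ _ (nbhs x) (nbhs x)).
    by move=> /(_ _ (entE (pi x))).
  by move=> x y; apply: symE.
apply: limn_esup_le_homo => n.
apply: lee_wpmul2l; first by rewrite lee_fin invr_ge0.
apply: lnE_le; first exact: S_sep_ge0.
apply: ereal_sup_le => _ [s [us [ins sep]] <-].
have injs : {in s &, injective sec}.
  by move=> a b _ _ e; rewrite -(secK a) -(secK b) e.
exists (map sec s); last by rewrite size_map.
split; first by rewrite map_inj_in_uniq.
split.
  move=> x /mapP [y ys ->]; apply: xiT; rewrite secK; exact: ins.
move=> x y /mapP [a ay ->] /mapP [b bs ->] ne [xiB hB].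
apply: (sep a b ay bs); first by move=> e; apply: ne; rewrite e.
split; first exact: ins.
move=> i lin; have := hB i lin; rewrite /E' /=.
have xa : xi Ig g n (pi (sec a)) by rewrite secK; apply: ins.
have xb : xi Ig g n (pi (sec b)) by rewrite secK; apply: ins.
by rewrite (itT n _ _ xa lin) (itT n _ _ xb lin) !secK.
Qed.
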